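(* Let $N=(P,T,F,M_0)$ be a Petri net with transition set $T=\{a,b,c\}$ (each transition being its own label, i.e. the labelling is injective). If the firing sequence $abbaac$ is enabled at $M_0$, then the firing sequence $aba$ is also enabled at $M_0$. Consequently, no injectively labelled Petri net has exactly the word $abbaac$ and its prefixes as its firing sequences (i.e. the word $abbaac$ is not synthesisable: $a$ cannot be prevented in the state reached after $ab$).
   Context: A Petri net is a tuple $N=(P,T,F,M_0)$ with finite disjoint sets $P$ (places) and $T$ (transitions), a flow function $F\colon (P\times T)\cup(T\times P)\to\mathbb{N}$, and an initial marking $M_0\colon P\to\mathbb{N}$. A transition $t$ is enabled at a marking $M$ if $M(p)\ge F(p,t)$ for all $p\in P$; firing it yields $M'$ with $M'(p)=M(p)-F(p,t)+F(t,p)$. A sequence $t_1t_2\cdots t_n$ is enabled (firable) at $M$ if $t_1$ is enabled at $M$, and successively each $t_{i+1}$ is enabled at the marking reached after firing $t_1\cdots t_i$. *)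

(* Defs.v *)
From mathcomp Require Import all_boot.
Set Implicit Arguments. Unset Strict Implicit. Unset Printing Implicit Defensive.

(* The transition set T = {a,b,c}; each transition is its own label. *)
Inductive trans := ta | tb | tc.

(* A Petri net N = (P, T, F, M0): P is a finite type of places, the flow
   function F is split into F(p,t) = pre p t and F(t,p) = post t p. *)
Section Net.
Variables (P : finType) (pre : P -> trans -> nat) (post : trans -> P -> nat).

Definition enabled (M : P -> nat) (t : trans) : Prop :=
  forall p : P, pre p t <= M p.

Definition fire (M : P -> nat) (t : trans) : P -> nat :=
  fun p => M p - pre p t + post t p.

Fixpoint firable (M : P -> nat) (w : seq trans) : Prop :=
  match w with
  | [::] => True
  | t :: w' => enabled M t /\ firable (fire M t) w'
  end.
End Net.

Definition is_prefix (w s : seq trans) : Prop := exists k, w = take k s.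

Definition abbaac : seq trans := [:: ta; tb; tb; ta; ta; tc].

(* Main.v *)
Require Import Defs.
From mathcomp Require Import all_boot.
From mathcomp Require Import zify.

Lemma part1 (P : finType) (pre : P -> trans -> nat) (post : trans -> P -> nat)
          (M0 : P -> nat) :
      firable pre post M0 abbaac -> firable pre post M0 [:: ta; tb; ta].
Proof.
rewrite /abbaac /=.
move=> [H1 [H2 [H3 [H4 [H5 _]]]]].
split; first exact: H1.
split; first exact: H2.
split; last by [].
move=> p; move: (H1 p) (H2 p) (H3 p) (H4 p) (H5 p).
rewrite /fire /=. lia.
Qed.

Theorem mainTheorem2 :
  (forall (P : finType) (pre : P -> trans -> nat) (post : trans -> P -> nat)
          (M0 : P -> nat),
      firable pre post M0 abbaac -> firable pre post M0 [:: ta; tb; ta])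
  /\
  (forall (P : finType) (pre : P -> trans -> nat) (post : trans -> P -> nat)
          (M0 : P -> nat),
      ~ (forall w : seq trans, firable pre post M0 w <-> is_prefix w abbaac)).
Proof.
split; first exact: part1.
move=> P pre post M0 H.
have Hf : firable pre post M0 abbaac by apply/H; exists 6.
have := (proj1 (H [:: ta; tb; ta]) (@part1 P pre post M0 Hf)).
by case=> [[|[|[|[|k]]]]].
Qed.
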